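(* Let ${\bf f}_1:\mathbb{R}^m\times\mathbb{R}_{\ge 0}\to\mathbb{R}^m$ and ${\bf f}_2:\mathbb{R}^m\times\mathbb{R}_{\ge 0}\to\mathbb{R}^m$ be continuously differentiable. Suppose both are contracting with identity metric, i.e. there is $\beta>0$ such that the symmetric parts of the Jacobians satisfy $\frac12\big(\frac{\partial {\bf f}_k}{\partial {\bf x}}+\frac{\partial {\bf f}_k}{\partial {\bf x}}^T\big)({\bf x},t)\le -\beta I$ for all ${\bf x},t$ and $k=1,2$; assume also that these Jacobians are uniformly bounded. Let ${\bf G}$ be a constant real $m\times p$ matrix, let $k_{12},k_{21}>0$ and let $T_{12},T_{21}\ge 0$ be constant delays. Consider the coupled delay system $$\dot{\bf x}_1(t)={\bf f}_1({\bf x}_1,t)+\tfrac{1}{k_{21}}{\bf G}{\bf G}^T\big({\bf x}_2(t-T_{21})-{\bf x}_1(t)\big),\qquad \dot{\bf x}_2(t)={\bf f}_2({\bf x}_2,t)+\tfrac{1}{k_{12}}{\bf G}{\bf G}^T\big({\bf x}_1(t-T_{12})-{\bf x}_2(t)\big),$$ with continuous initial functions on $[-\max(T_{12},T_{21}),0]$. Then the overall system is asymptotically contracting: for all values of the delays, any two solutions converge asymptotically to each other (all solutions converge to a single trajectory, independently of the initial conditions).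
   Context: A system is called asymptotically contracting if every virtual displacement (infinitesimal difference $\delta{\bf x}$ between neighboring solutions, $\delta{\bf x}=\frac{\partial {\bf x}}{\partial {\bf x}_o}d{\bf x}_o$ with respect to initial data) tends to zero as $t\to\infty$, which implies global asymptotic convergence of all solutions to a single trajectory. *)

(* Defs.v *)
From HB Require Import structures.
From mathcomp Require Import all_boot all_order all_algebra.
From mathcomp Require Import all_classical all_reals all_analysis.
Import Order.TTheory GRing.Theory Num.Theory.
Import numFieldNormedType.Exports.
Local Open Scope classical_set_scope.
Local Open Scope ring_scope.

Set Implicit Arguments.
Unset Strict Implicit.
Unset Printing Implicit Defensive.

Definition loewner_le (R : realType) (m : nat) (A B : 'M[R]_m) : Prop :=
  forall v : 'rV[R]_m, 0 <= (v *m (B - A) *m v^T) 0 0.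

Definition sym_part (R : realType) (m : nat) (J : 'M[R]_m) : 'M[R]_m :=
  2^-1 *: (J + J^T).

(* Jacobian of x |-> f x t at x (MathComp-Analysis convention: 'D_v g x = v *m 'J g x,
   i.e. the transpose of the usual Jacobian; the symmetric part is unaffected). *)
Definition jac (R : realType) (m : nat) (f : 'rV[R]_m -> R -> 'rV[R]_m)
  (x : 'rV[R]_m) (t : R) : 'M[R]_m := jacobian (fun y => f y t) x.

Definition C1 (R : realType) (m : nat) (f : 'rV[R]_m -> R -> 'rV[R]_m) : Prop :=
  let F := fun p : 'rV[R]_m * R => f p.1 p.2 in
  (forall p, differentiable F p) /\
  (forall v : 'rV[R]_m * R, continuous (fun p => 'd F p v)).

Definition contracting_id (R : realType) (m : nat) (f : 'rV[R]_m -> R -> 'rV[R]_m)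
  (beta : R) : Prop :=
  forall x t, 0 <= t -> loewner_le (sym_part (jac f x t)) (- beta *: 1%:M).

Definition bounded_jac (R : realType) (m : nat) (f : 'rV[R]_m -> R -> 'rV[R]_m) : Prop :=
  exists M : R, forall x t, 0 <= t -> `|jac f x t| <= M.

(* (x1, x2) is a solution of the coupled delay system, with continuous initial
   functions on [-max(T12,T21), 0] (continuity on [-max(T12,T21), +oo)). *)
Definition coupled_solution (R : realType) (m p : nat)
  (f1 f2 : 'rV[R]_m -> R -> 'rV[R]_m) (G : 'M[R]_(m, p))
  (k12 k21 T12 T21 : R) (x1 x2 : R -> 'rV[R]_m) : Prop :=
  let T := Num.max T12 T21 in
  {within [set t : R | - T <= t], continuous x1} /\
  {within [set t : R | - T <= t], continuous x2} /\
  (forall t : R, 0 < t ->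
     is_derive t 1 x1 (f1 (x1 t) t + k21^-1 *: ((x2 (t - T21) - x1 t) *m (G *m G^T)))) /\
  (forall t : R, 0 < t ->
     is_derive t 1 x2 (f2 (x2 t) t + k12^-1 *: ((x1 (t - T12) - x2 t) *m (G *m G^T)))).

(* Main.v *)
Require Import Defs.
From HB Require Import structures.
From mathcomp Require Import all_boot all_order all_algebra.
From mathcomp Require Import all_classical all_reals all_analysis.
From mathcomp Require Import ring lra.
Import Order.TTheory GRing.Theory Num.Theory.
Import numFieldNormedType.Exports.
Local Open Scope classical_set_scope.
Local Open Scope ring_scope.
Set Implicit Arguments.
Unset Strict Implicit.
Unset Printing Implicit Defensive.
Section Dot.
Variable R : realType.

Definition dot (m : nat) (u v : 'rV[R]_m) : R := \sum_i u 0 i * v 0 i.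
Definition sq (m : nat) (u : 'rV[R]_m) : R := dot u u.

Lemma dotE m (u v : 'rV[R]_m) : dot u v = (u *m v^T) 0 0.
Proof. by rewrite !mxE /dot; apply: eq_bigr => i _; rewrite !mxE. Qed.

Lemma dotC m (u v : 'rV[R]_m) : dot u v = dot v u.
Proof. by rewrite /dot; apply: eq_bigr => i _; rewrite mulrC. Qed.

Lemma dotDl m (u w v : 'rV[R]_m) : dot (u + w) v = dot u v + dot w v.
Proof. by rewrite /dot -big_split; apply: eq_bigr => i _; rewrite !mxE mulrDl. Qed.

Lemma dotNl m (u v : 'rV[R]_m) : dot (- u) v = - dot u v.
Proof. by rewrite /dot -sumrN; apply: eq_bigr => i _; rewrite !mxE mulNr. Qed.

Lemma dotBl m (u w v : 'rV[R]_m) : dot (u - w) v = dot u v - dot w v.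
Proof. by rewrite dotDl dotNl. Qed.

Lemma dotZl m (a : R) (u v : 'rV[R]_m) : dot (a *: u) v = a * dot u v.
Proof. by rewrite /dot mulr_sumr; apply: eq_bigr => i _; rewrite !mxE mulrA. Qed.

Lemma dot0l m (v : 'rV[R]_m) : dot 0 v = 0.
Proof. by rewrite /dot big1 // => i _; rewrite mxE mul0r. Qed.

Lemma dotDr m (u w v : 'rV[R]_m) : dot v (u + w) = dot v u + dot v w.
Proof. by rewrite dotC dotDl !(dotC v). Qed.
Lemma dotBr m (u w v : 'rV[R]_m) : dot v (u - w) = dot v u - dot v w.
Proof. by rewrite dotC dotBl !(dotC v). Qed.
Lemma dotZr m (a : R) (u v : 'rV[R]_m) : dot v (a *: u) = a * dot v u.
Proof. by rewrite dotC dotZl dotC. Qed.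
Lemma dot0r m (v : 'rV[R]_m) : dot v 0 = 0.
Proof. by rewrite dotC dot0l. Qed.

Lemma dot_mulmx m n (u : 'rV[R]_m) (v : 'rV[R]_n) (B : 'M[R]_(m, n)) :
  dot (u *m B) v = dot u (v *m B^T).
Proof. by rewrite !dotE trmx_mul trmxK mulmxA. Qed.

Lemma sq_ge0 m (u : 'rV[R]_m) : 0 <= sq u.
Proof. by apply: sumr_ge0 => i _; rewrite -expr2 sqr_ge0. Qed.

Lemma sq_coord m (u : 'rV[R]_m) i : u 0 i ^+ 2 <= sq u.
Proof.
rewrite /sq /dot (bigD1 i) //= -expr2 lerDl.
by apply: sumr_ge0 => j _; rewrite -expr2 sqr_ge0.
Qed.

Lemma dot_le m (u v : 'rV[R]_m) : 2 * dot u v <= sq u + sq v.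
Proof.
have := sq_ge0 (u - v); rewrite /sq dotBl !dotBr (dotC v u).
move=> h; rewrite -subr_ge0; lra.
Qed.

Lemma dot_ge m (u v : 'rV[R]_m) : - (sq u + sq v) <= 2 * dot u v.
Proof.
have := sq_ge0 (u + v); rewrite /sq dotDl !dotDr (dotC v u).
move=> h; rewrite -subr_ge0; lra.
Qed.

Lemma sum_sq_le n (z : 'I_n -> R) :
  (\sum_i z i) ^+ 2 <= 2 ^+ n * \sum_i z i ^+ 2.
Proof.
elim: n z => [|n IH] z; first by rewrite !big_ord0 expr0n /= mulr0.
rewrite !big_ord_recr /= [2 ^+ n.+1]exprS.
set S := \sum_(i < n) z (widen_ord (leqnSn n) i).
set S2 := \sum_(i < n) z (widen_ord (leqnSn n) i) ^+ 2.
have h := IH (fun i => z (widen_ord (leqnSn n) i)); rewrite -/S -/S2 in h.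
have h2 : 1 <= 2 ^+ n :> R by rewrite exprn_ege1 // ler1n.
have h3 : 0 <= z ord_max ^+ 2 by rewrite sqr_ge0.
have h4 : (S + z ord_max) ^+ 2 <= 2 * S ^+ 2 + 2 * z ord_max ^+ 2.
  have := sqr_ge0 (S - z ord_max); rewrite -subr_ge0; nra.
have h5 : z ord_max ^+ 2 <= 2 ^+ n * z ord_max ^+ 2 by rewrite ler_peMl.
rewrite mulrDr; lra.
Qed.

End Dot.
Lemma zid (V : zmodType) (a b P X Q Y : V) :
  (a + (P - X)) - (b + (Q - Y)) = (a - b) + ((P - Q) - (X - Y)).
Proof.
rewrite opprD addrACA; congr (_ + _).
by rewrite opprB [Y - Q]addrC [in RHS]opprB addrACA [- X + Y]addrC.
Qed.
Section Dot2.
Variable R : realType.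
Lemma entry_le_norm m n (B : 'M[R]_(m, n)) i j : `|B i j| <= `|B|.
Proof.
rewrite [X in _ <= X]/Num.Def.normr /= mx_normrE.
exact: (le_bigmax _ _ (i, j)).
Qed.

Lemma sq_mul_le m n (u : 'rV[R]_m) (B : 'M[R]_(m, n)) :
  sq (u *m B) <= n%:R * 2 ^+ m * `|B| ^+ 2 * sq u.
Proof.
rewrite /sq /dot.
have step j : (u *m B) 0 j * (u *m B) 0 j <= 2 ^+ m * `|B| ^+ 2 * sq u.
  rewrite -expr2 mxE.
  apply: le_trans (sum_sq_le _) _.
  rewrite -mulrA ler_wpM2l ?exprn_ge0 // /sq /dot mulr_sumr.
  apply: ler_sum => i _; rewrite exprMn -expr2 mulrC ler_wpM2r ?sqr_ge0 //.
  rewrite -real_normK ?num_real // lerXn2r ?nnegrE ?normr_ge0 //.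
  exact: entry_le_norm.
apply: le_trans (ler_sum _ (fun j _ => step j)) _.
by rewrite sumr_const card_ord -[_ *+ n]mulr_natl !mulrA.
Qed.
End Dot2.
Section Deriv.
Variable R : realType.

Lemma is_derive_coord m n (F : R -> 'M[R]_(m, n)) (t : R) (F' : 'M[R]_(m, n)) i j :
  is_derive t 1 F F' -> is_derive t 1 (fun s => F s i j) (F' i j).
Proof.
move=> [dF vF]; apply: DeriveDef.
  by move/derivable_mxP: dF; apply.
by rewrite -vF derive_mx // mxE.
Qed.

Lemma is_derive_dot m (F G : R -> 'rV[R]_m) (t : R) (F' G' : 'rV[R]_m) :
  is_derive t 1 F F' -> is_derive t 1 G G' ->
  is_derive t 1 (fun s => dot (F s) (G s)) (dot F' (G t) + dot (F t) G').
Proof.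
move=> dF dG.
have -> : (fun s => dot (F s) (G s)) = \sum_(i < m) (fun s => F s 0 i * G s 0 i).
  by apply/funext => s; rewrite /dot fct_sumE.
have -> : dot F' (G t) + dot (F t) G' =
   \sum_(i < m) (F t 0 i * G' 0 i + G t 0 i * F' 0 i).
  rewrite /dot -big_split; apply: eq_bigr => i _ /=; rewrite addrC; congr (_ + _).
  by rewrite mulrC.
apply: is_derive_sum => i.
have := is_derive_coord 0 i dF; have := is_derive_coord 0 i dG => h1 h2.
exact: is_deriveM.
Qed.

End Deriv.
Section MVTdot.
Variable R : realType.

Lemma is_derive_compd (V W : normedModType R) (F : R -> V) (g : V -> W) (t : R) (F' : V) :
  is_derive t 1 F F' -> differentiable g (F t) ->
  is_derive t 1 (g \o F) ('d g (F t) F').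
Proof.
move=> [dF vF] dg.
have dF' : differentiable F t by apply/derivable1_diffP.
have dgF : differentiable (g \o F) t by apply: differentiable_comp.
apply: DeriveDef; first by apply/derivable1_diffP.
rewrite deriveE // diff_comp //=.
by rewrite -vF deriveE.
Qed.

Lemma is_derive_line m (y d : 'rV[R]_m) (s : R) :
  is_derive s 1 (fun s : R => y + s *: d) d.
Proof.
have h1 : is_derive s 1 (fun s : R => s *: d) d.
  have dZ : differentiable (fun s : R => s *: d) s.
    by apply: differentiableZl.
  apply: DeriveDef; first by apply/derivable1_diffP.
  rewrite deriveE // diffZl //=.
  have -> : 'd id s 1 = 1 by rewrite diff_val.
  by rewrite scale1r.
have := is_deriveD (is_derive_cst y s 1) h1.
by rewrite add0r.
Qed.

End MVTdot.
Section MVT2.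
Variable R : realType.

Lemma diff_slice m (f : 'rV[R]_m -> R -> 'rV[R]_m) : C1 f ->
  forall z t, differentiable (fun y => f y t) z.
Proof.
move=> [df _] z t.
have -> : (fun y => f y t) = (fun p : 'rV[R]_m * R => f p.1 p.2) \o (fun y => (y, t)) by [].
apply: differentiable_comp; last exact: df.
by apply: differentiable_pair.
Qed.

Lemma is_derive_phi m (f : 'rV[R]_m -> R -> 'rV[R]_m) (y d : 'rV[R]_m) (t s : R) : C1 f ->
  is_derive s 1 (fun s => dot (f (y + s *: d) t) d) (dot (d *m jac f (y + s *: d) t) d).
Proof.
move=> hf.
have h1 : is_derive s 1 (fun s => f (y + s *: d) t) (d *m jac f (y + s *: d) t).
  have := is_derive_compd (is_derive_line y d s) (diff_slice hf (y + s *: d) t).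
  rewrite /jac -deriveEjacobian; last exact: diff_slice.
  by rewrite deriveE //; exact: diff_slice.
have := is_derive_dot h1 (is_derive_cst d s 1).
by rewrite dot0r addr0.
Qed.

Lemma mvt_dot m (f : 'rV[R]_m -> R -> 'rV[R]_m) (x y : 'rV[R]_m) (t : R) : C1 f ->
  exists2 c, c \in `[0, 1]%R &
    dot (f x t - f y t) (x - y) = dot ((x - y) *m jac f (y + c *: (x - y)) t) (x - y).
Proof.
move=> hf; set d := x - y.
have hd s := is_derive_phi y d t s hf.
have [|c c01 h] := @MVT_segment R (fun s => dot (f (y + s *: d) t) d) _ 0 1 ler01 (fun s _ => hd s).
  apply: derivable_within_continuous => s _.
  by have [] := hd s.
exists c => //.
move: h; rewrite scale1r scale0r addr0 subr0 mulr1 -dotBl.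

by have -> : y + d = x by rewrite /d addrC subrK.
Qed.

End MVT2.
Section Ineq.
Variable R : realType.

Lemma dot_sym_part m (d : 'rV[R]_m) (J : 'M[R]_m) :
  dot (d *m sym_part J) d = dot (d *m J) d.
Proof.
rewrite /sym_part -scalemxAr dotZl mulmxDr dotDl.
rewrite (dot_mulmx d d (J^T)) trmxK dotC.
lra.
Qed.

Lemma contr_ineq m (f : 'rV[R]_m -> R -> 'rV[R]_m) (beta : R) (x y : 'rV[R]_m) (t : R) :
  C1 f -> contracting_id f beta -> 0 <= t ->
  dot (f x t - f y t) (x - y) <= - beta * sq (x - y).
Proof.
move=> hf hc t0.
have [c _ ->] := mvt_dot x y t hf.
have := hc (y + c *: (x - y)) t t0 (x - y).
rewrite -dotE mulmxBr scalemx1 mul_mx_scalar dotBl dotZl dot_sym_part.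
rewrite /sq subr_ge0 => h; lra.
Qed.

Lemma lower_ineq m (f : 'rV[R]_m -> R -> 'rV[R]_m) (M : R) (x y : 'rV[R]_m) (t : R) :
  C1 f -> (forall z, `|jac f z t| <= M) ->
  - ((m%:R * 2 ^+ m * M ^+ 2 + 1) / 2) * sq (x - y) <= dot (f x t - f y t) (x - y).
Proof.
move=> hf hM.
have [c _ ->] := mvt_dot x y t hf.
set J := jac f _ t; set d := x - y.
have h1 := dot_ge (d *m J) d.
have h2 := sq_mul_le d J.
have h3 : `|J| ^+ 2 <= M ^+ 2.
  by rewrite -[M ^+ 2]real_normK ?num_real // lerXn2r ?nnegrE ?normr_ge0 // (le_trans _ (ler_norm M)) ?hM.
have h4 : 0 <= sq d := sq_ge0 d.
have h5 : m%:R * 2 ^+ m * `|J| ^+ 2 * sq d <= m%:R * 2 ^+ m * M ^+ 2 * sq d.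
  by rewrite ler_wpM2r // ler_wpM2l // mulr_ge0 // exprn_ge0.
rewrite mulNr mulrC mulrA; lra.
Qed.

End Ineq.
Section Deriv2.
Variable R : realType.

Lemma is_derive_mulmx m n q (F : R -> 'M[R]_(m, n)) (t : R) (F' : 'M[R]_(m, n))
  (B : 'M[R]_(n, q)) :
  is_derive t 1 F F' -> is_derive t 1 (fun s => F s *m B) (F' *m B).
Proof.
move=> dF.
have hc i j : is_derive t 1 (fun s => (F s *m B) i j) ((F' *m B) i j).
  have -> : (fun s => (F s *m B) i j) = \sum_k (fun s => F s i k * B k j).
    by apply/funext => s; rewrite mxE fct_sumE.
  rewrite mxE; apply: is_derive_sum => k.
  have h := is_deriveM (is_derive_coord i k dF) (is_derive_cst (B k j) t 1).
  apply: is_derive_eq h _.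
  by rewrite scaler0 add0r /= /GRing.scale /= mulrC.
have dM : derivable (fun s => F s *m B) t 1.
  by apply/derivable_mxP => i j; case: (hc i j).
apply: DeriveDef => //.
rewrite derive_mx //; apply/matrixP => i j; rewrite mxE.
by case: (hc i j).
Qed.

Lemma is_derive_scal (f : R -> R) (k t df : R) :
  is_derive t 1 f df -> is_derive t 1 (fun s => k * f s) (k * df).
Proof. by move=> h; have := is_deriveZ k h. Qed.

End Deriv2.
Lemma is_derive_congr (R : realType) (V : normedModType R) (f g : R -> V) (t : R) (df dg : V) :
  is_derive t 1 f df -> (forall s, f s = g s) -> df = dg -> is_derive t 1 g dg.
Proof. by move=> h /funext <- <-. Qed.
Section Prim.
Variable R : realType.

Definition prim (g : R -> R) (a x : R) : R :=
  (\int[@lebesgue_measure R]_(s in [set` `[a, x]]) g s)%R.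

Lemma prim_derive (g : R -> R) (a : R) :
  (forall s, a <= s -> derivable g s 1) ->
  forall x, a < x -> is_derive x 1 (prim g a) (g x).
Proof.
move=> dg x ax.
have xu : x < x + 1 by rewrite ltrDl.
have hi : (@lebesgue_measure R).-integrable `[a, x + 1] (EFin \o g).
  apply: continuous_compact_integrable; first exact: segment_compact.
  apply: derivable_within_continuous => s; rewrite in_itv /= => /andP[hs _].
  exact: dg.
have hc : {for x, continuous g}.
  apply/differentiable_continuous/derivable1_diffP.
  by apply: dg; rewrite ltW.
have [d1 d2] := @continuous_FTC1_closed R g a x (x + 1) xu hi ax hc.
apply: DeriveDef; first exact: d1.
by rewrite -derive1E d2.
Qed.

Lemma prim_mono (g : R -> R) (a : R) :
  (forall s, a <= s -> derivable g s 1) -> (forall s, a <= s -> 0 <= g s) ->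
  forall u v, a < u -> u <= v -> prim g a u <= prim g a v.
Proof.
move=> dg g0 u v au uv.
have hd s : u <= s -> is_derive s 1 (prim g a) (g s).
  by move=> us; apply: prim_derive => //; apply: lt_le_trans us.
apply: (@ger0_derive1_ndecr R (prim g a) u v).
- move=> s; rewrite in_itv /= => /andP[us _].
  by have [] := hd s (ltW us).
- move=> s; rewrite in_itv /= => /andP[us _].
  rewrite derive1E; have [_ ->] := hd s (ltW us).
  by apply: g0; rewrite ltW // (lt_trans au us).
- apply: derivable_within_continuous => s; rewrite in_itv /= => /andP[us _].
  by have [] := hd s us.
- by [].
- by [].
- by [].
Qed.

Lemma nonincr_of (f df : R -> R) (u v : R) : u <= v ->
  (forall s, u <= s <= v -> is_derive s 1 f (df s)) ->
  (forall s, u < s < v -> df s <= 0) -> f v <= f u.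
Proof.
move=> uv hd hn.
apply: (@ler0_derive1_nincr R f u v) => //.
- move=> s; rewrite in_itv /= => /andP[us sv].
  have h : u <= s <= v by rewrite !ltW.
  by have [] := hd s h.
- move=> s; rewrite in_itv /= => /andP[us sv].
  have h : u <= s <= v by rewrite !ltW.
  rewrite derive1E; have [_ ->] := hd s h.
  by apply: hn; rewrite us.
- apply: derivable_within_continuous => s; rewrite in_itv /= => hs.
  by have [] := hd s.
Qed.

End Prim.

Lemma is_derive_shiftl (R : realType) (f : R -> R) (c t df : R) :
  is_derive (t - c) 1 f df -> is_derive t 1 (fun s => f (s - c)) df.
Proof.
move=> h.
have hF : is_derive t 1 (fun s : R => s - c) 1.
  apply: (is_derive_congr (is_deriveB (is_derive_id t 1) (is_derive_cst c t 1))) => //.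
  by rewrite subr0.
have df' : differentiable f (t - c) by apply/derivable1_diffP; case: h.
have := is_derive_compd hF df'.
rewrite -deriveE //; case: h => _ ->.
by [].
Qed.
Section Main.
Variables (R : realType) (m p : nat) (f1 f2 : 'rV[R]_m -> R -> 'rV[R]_m)
  (G : 'M[R]_(m, p)) (k12 k21 T12 T21 beta : R) (x1 x2 y1 y2 : R -> 'rV[R]_m).
Hypotheses (hf1 : C1 f1) (hf2 : C1 f2) (hb : 0 < beta)
  (hc1 : contracting_id f1 beta) (hc2 : contracting_id f2 beta)
  (hk12 : 0 < k12) (hk21 : 0 < k21) (hT12 : 0 <= T12) (hT21 : 0 <= T21).
Let A := G *m G^T.
Hypotheses
  (dx1 : forall t : R, 0 < t ->
     is_derive t 1 x1 (f1 (x1 t) t + k21^-1 *: ((x2 (t - T21) - x1 t) *m A)))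
  (dx2 : forall t : R, 0 < t ->
     is_derive t 1 x2 (f2 (x2 t) t + k12^-1 *: ((x1 (t - T12) - x2 t) *m A)))
  (dy1 : forall t : R, 0 < t ->
     is_derive t 1 y1 (f1 (y1 t) t + k21^-1 *: ((y2 (t - T21) - y1 t) *m A)))
  (dy2 : forall t : R, 0 < t ->
     is_derive t 1 y2 (f2 (y2 t) t + k12^-1 *: ((y1 (t - T12) - y2 t) *m A))).

Let e1 (t : R) := x1 t - y1 t.
Let e2 (t : R) := x2 t - y2 t.
Let D1 (t : R) := (f1 (x1 t) t - f1 (y1 t) t) + k21^-1 *: ((e2 (t - T21) - e1 t) *m A).
Let D2 (t : R) := (f2 (x2 t) t - f2 (y2 t) t) + k12^-1 *: ((e1 (t - T12) - e2 t) *m A).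

Lemma de1 (t : R) : 0 < t -> is_derive t 1 e1 (D1 t).
Proof.
move=> t0; have h := is_deriveB (dx1 t0) (dy1 t0).
suff -> : D1 t = (f1 (x1 t) t + k21^-1 *: ((x2 (t - T21) - x1 t) *m A)) -
  (f1 (y1 t) t + k21^-1 *: ((y2 (t - T21) - y1 t) *m A)) by exact: h.
by rewrite /D1 /e1 /e2 !mulmxBl !scalerBr zid.
Qed.

Lemma de2 (t : R) : 0 < t -> is_derive t 1 e2 (D2 t).
Proof.
move=> t0; have h := is_deriveB (dx2 t0) (dy2 t0).
suff -> : D2 t = (f2 (x2 t) t + k12^-1 *: ((x1 (t - T12) - x2 t) *m A)) -
  (f2 (y2 t) t + k12^-1 *: ((y1 (t - T12) - y2 t) *m A)) by exact: h.
by rewrite /D2 /e1 /e2 !mulmxBl !scalerBr zid.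
Qed.


Let W (t : R) := k21 * sq (e1 t) + k12 * sq (e2 t).
Let a1 (t : R) := e1 t *m G.
Let a2 (t : R) := e2 t *m G.
Let g1 (t : R) := sq (a1 t).
Let g2 (t : R) := sq (a2 t).
Let W' (t : R) := k21 * (2 * dot (D1 t) (e1 t)) + k12 * (2 * dot (D2 t) (e2 t)).

Lemma dW (t : R) : 0 < t -> is_derive t 1 W (W' t).
Proof.
move=> t0.
have h1 := is_derive_scal k21 (is_derive_dot (de1 t0) (de1 t0)).
have h2 := is_derive_scal k12 (is_derive_dot (de2 t0) (de2 t0)).
apply: (is_derive_congr (is_deriveD h1 h2)) => //.
by rewrite /W' (dotC (e1 t)) (dotC (e2 t)) !mulr2n !mulrDl !mul1r.
Qed.

Lemma dotA u v : dot (u *m A) v = dot (u *m G) (v *m G).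
Proof. by rewrite /A mulmxA dot_mulmx trmxK. Qed.

Lemma alg1 (k : R) (D u v : 'rV[R]_m) : 0 < k ->
  k * (2 * dot (D + k^-1 *: ((u - v) *m A)) v) =
  2 * (k * dot D v + dot (u *m G) (v *m G) - sq (v *m G)).
Proof.
move=> k0.
rewrite dotDl dotZl mulmxBl dotBl !dotA.
have i1 : k * k^-1 = 1 by rewrite mulfV // gt_eqF.
rewrite /sq; set X := dot (u *m G) _; set Y := dot (v *m G) _.
rewrite mulrA (mulrC k 2) -mulrA mulrDr mulrA i1 mul1r.
lra.
Qed.

Lemma W'E (t : R) : W' t =
  2 * (k21 * dot (f1 (x1 t) t - f1 (y1 t) t) (e1 t) + dot (a2 (t - T21)) (a1 t) - g1 t) +
  2 * (k12 * dot (f2 (x2 t) t - f2 (y2 t) t) (e2 t) + dot (a1 (t - T12)) (a2 t) - g2 t).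
Proof. by rewrite /W' /D1 /D2 !alg1. Qed.


Let a0 : R := 2^-1.
Let T := Num.max T12 T21.
Let P1 := prim g1 a0.
Let P2 := prim g2 a0.
Let H (t : R) := W t + (P1 t - P1 (t - T12)) + (P2 t - P2 (t - T21)).
Let H' (t : R) := W' t + (g1 t - g1 (t - T12)) + (g2 t - g2 (t - T21)).

Lemma a0_gt0 : 0 < a0. Proof. by rewrite /a0 invr_gt0. Qed.
Lemma T12_le : T12 <= T. Proof. by rewrite /T le_max lexx. Qed.
Lemma T21_le : T21 <= T. Proof. by rewrite /T le_max lexx orbT. Qed.
Lemma T_ge0 : 0 <= T. Proof. exact: le_trans hT12 T12_le. Qed.

Lemma dg1 (s : R) : 0 < s -> derivable g1 s 1.
Proof.
move=> s0; have h := is_derive_mulmx G (de1 s0).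
by have [] := is_derive_dot h h.
Qed.

Lemma dg2 (s : R) : 0 < s -> derivable g2 s 1.
Proof.
move=> s0; have h := is_derive_mulmx G (de2 s0).
by have [] := is_derive_dot h h.
Qed.

Lemma dg1' (s : R) : a0 <= s -> derivable g1 s 1.
Proof. by move=> h; apply: dg1; apply: lt_le_trans h; exact: a0_gt0. Qed.
Lemma dg2' (s : R) : a0 <= s -> derivable g2 s 1.
Proof. by move=> h; apply: dg2; apply: lt_le_trans h; exact: a0_gt0. Qed.

Lemma dH (t : R) : T + a0 < t -> is_derive t 1 H (H' t).
Proof.
move=> tT.
have t0 : 0 < t.
  by apply: le_lt_trans tT; rewrite addr_ge0 ?T_ge0 // ltW // a0_gt0.
have h12 : a0 < t - T12.
  by rewrite ltrBrDr addrC; apply: le_lt_trans tT; rewrite lerD2r T12_le.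
have h21 : a0 < t - T21.
  by rewrite ltrBrDr addrC; apply: le_lt_trans tT; rewrite lerD2r T21_le.
have ht : a0 < t by apply: lt_le_trans h12 _; rewrite lerBlDr lerDl.
have hP1t : is_derive t 1 P1 (g1 t) := prim_derive dg1' ht.
have hP2t : is_derive t 1 P2 (g2 t) := prim_derive dg2' ht.
have hP1d := is_derive_shiftl (prim_derive dg1' h12).
have hP2d := is_derive_shiftl (prim_derive dg2' h21).
exact: (is_derive_congr (is_deriveD (is_deriveD (dW t0) (is_deriveB hP1t hP1d))
   (is_deriveB hP2t hP2d))).
Qed.


Lemma W_ge0 (t : R) : 0 <= W t.
Proof. by apply: addr_ge0; apply: mulr_ge0; rewrite ?sq_ge0 // ltW. Qed.

Lemma dH_le (t : R) : 0 <= t -> H' t <= - (2 * beta) * W t.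
Proof.
move=> t0.
rewrite /H' W'E.
have c1 := contr_ineq (x1 t) (y1 t) hf1 hc1 t0.
have c2 := contr_ineq (x2 t) (y2 t) hf2 hc2 t0.
have c1' : k21 * dot (f1 (x1 t) t - f1 (y1 t) t) (e1 t) <= k21 * (- beta * sq (e1 t)).
  by rewrite ler_pM2l.
have c2' : k12 * dot (f2 (x2 t) t - f2 (y2 t) t) (e2 t) <= k12 * (- beta * sq (e2 t)).
  by rewrite ler_pM2l.
have d1 := dot_le (a2 (t - T21)) (a1 t).
have d2 := dot_le (a1 (t - T12)) (a2 t).
rewrite /W -/(g1 t) -/(g2 t) in d1 d2 *.
rewrite /g1 /g2 in d1 d2 *.
lra.
Qed.

Lemma H_ge_W (t : R) : T + 1 <= t -> W t <= H t.
Proof.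
move=> tT.
have h12 : a0 < t - T12.
  rewrite ltrBrDr addrC; apply: lt_le_trans tT; rewrite ler_ltD ?T12_le //.
  by rewrite /a0 invf_lt1 // ltr1n.
have h21 : a0 < t - T21.
  rewrite ltrBrDr addrC; apply: lt_le_trans tT; rewrite ler_ltD ?T21_le //.
  by rewrite /a0 invf_lt1 // ltr1n.
have m1 : P1 (t - T12) <= P1 t.
  apply: prim_mono dg1' _ _ _ h12 _ => //; first by move=> *; exact: sq_ge0.
  by rewrite lerBlDr lerDl.
have m2 : P2 (t - T21) <= P2 t.
  apply: prim_mono dg2' _ _ _ h21 _ => //; first by move=> *; exact: sq_ge0.
  by rewrite lerBlDr lerDl.
rewrite /H; lra.
Qed.

Lemma Hmono (u v : R) : T + 1 <= u -> u <= v -> H v <= H u.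
Proof.
move=> Tu uv.
apply: (@nonincr_of R H H' u v uv).
- move=> s /andP[us _]; apply: dH; apply: lt_le_trans us.
  by apply: lt_le_trans Tu; rewrite ltrD2l /a0 invf_lt1 // ltr1n.
- move=> s /andP[us _].
  have s0 : 0 <= s.
    apply: le_trans (ltW us); apply: le_trans Tu.
    by rewrite addr_ge0 // T_ge0.
  apply: le_trans (dH_le s0) _.
  by rewrite mulNr oppr_le0 mulr_ge0 ?W_ge0 // mulr_ge0 // ltW.
Qed.


Lemma sq_e1_le (t : R) : k21 * sq (e1 t) <= W t.
Proof. by rewrite /W lerDl mulr_ge0 ?sq_ge0 // ltW. Qed.
Lemma sq_e2_le (t : R) : k12 * sq (e2 t) <= W t.
Proof. by rewrite /W lerDr mulr_ge0 ?sq_ge0 // ltW. Qed.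

Let t0 := T + 1.
Let t1 := t0 + T.

Lemma W_bound (s : R) : t0 <= s -> W s <= H t0.
Proof. by move=> h; apply: le_trans (H_ge_W h) (Hmono (lexx _) h). Qed.

Hypotheses (M1 M2 : R)
  (hM1 : forall x t, 0 <= t -> `|jac f1 x t| <= M1)
  (hM2 : forall x t, 0 <= t -> `|jac f2 x t| <= M2).

Lemma W'_ge : exists D, 0 < D /\ forall t, t1 <= t -> - D <= W' t.
Proof.
set B := H t0.
set cG := p%:R * 2 ^+ m * `|G| ^+ 2.
set C1 := (m%:R * 2 ^+ m * M1 ^+ 2 + 1) / 2.
set C2 := (m%:R * 2 ^+ m * M2 ^+ 2 + 1) / 2.
set K := cG * (B / k21 + B / k12).
have B0 : 0 <= B by apply: le_trans (W_ge0 t0) (W_bound (lexx _)).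
have cG0 : 0 <= cG.
  by apply: mulr_ge0; [apply: mulr_ge0|exact: sqr_ge0]; [exact: ler0n|exact: exprn_ge0].
have C10 : 0 <= C1.
  apply: divr_ge0 => //; apply: addr_ge0 => //.
  by apply: mulr_ge0; [apply: mulr_ge0|exact: sqr_ge0]; [exact: ler0n|exact: exprn_ge0].
have C20 : 0 <= C2.
  apply: divr_ge0 => //; apply: addr_ge0 => //.
  by apply: mulr_ge0; [apply: mulr_ge0|exact: sqr_ge0]; [exact: ler0n|exact: exprn_ge0].
have Bk1 : 0 <= B / k21 by rewrite divr_ge0 // ltW.
have Bk2 : 0 <= B / k12 by rewrite divr_ge0 // ltW.
have hs1 s : t0 <= s -> sq (e1 s) <= B / k21.
  by move=> h; rewrite ler_pdivlMr // mulrC (le_trans (sq_e1_le s)) // W_bound.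
have hs2 s : t0 <= s -> sq (e2 s) <= B / k12.
  by move=> h; rewrite ler_pdivlMr // mulrC (le_trans (sq_e2_le s)) // W_bound.
have hg1 s : t0 <= s -> g1 s <= K.
  move=> h; apply: le_trans (sq_mul_le _ _) _; rewrite -/cG ler_wpM2l //.
  by apply: le_trans (hs1 s h) _; rewrite lerDl.
have hg2 s : t0 <= s -> g2 s <= K.
  move=> h; apply: le_trans (sq_mul_le _ _) _; rewrite -/cG ler_wpM2l //.
  by apply: le_trans (hs2 s h) _; rewrite lerDr.
exists (2 * C1 * B + 2 * C2 * B + 8 * K + 1); split.
  have K0 : 0 <= K by apply: le_trans (sq_ge0 (a1 t0)) (hg1 _ (lexx _)).
  have : 0 <= C1 * B by exact: mulr_ge0.
  have : 0 <= C2 * B by exact: mulr_ge0.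
  lra.
move=> t tt1.
have T0 := T_ge0.
have tt0 : t0 <= t by apply: le_trans tt1; rewrite /t1 lerDl.
have t0' : 0 <= t by apply: le_trans tt0; rewrite /t0 addr_ge0.
have d12 : t0 <= t - T12 by rewrite lerBrDr; apply: le_trans tt1; rewrite lerD2l T12_le.
have d21 : t0 <= t - T21 by rewrite lerBrDr; apply: le_trans tt1; rewrite lerD2l T21_le.
have l1 := lower_ineq (x1 t) (y1 t) hf1 (fun z => hM1 z t0').
have l2 := lower_ineq (x2 t) (y2 t) hf2 (fun z => hM2 z t0').
rewrite -/C1 -/C2 in l1 l2.
have l1' : - (C1 * B) <= k21 * dot (f1 (x1 t) t - f1 (y1 t) t) (e1 t).
  apply: le_trans (_ : k21 * (- C1 * sq (e1 t)) <= _); last by rewrite ler_pM2l.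
  rewrite mulrCA mulNr lerN2 ler_wpM2l //.
  by apply: le_trans (sq_e1_le t) (W_bound tt0).
have l2' : - (C2 * B) <= k12 * dot (f2 (x2 t) t - f2 (y2 t) t) (e2 t).
  apply: le_trans (_ : k12 * (- C2 * sq (e2 t)) <= _); last by rewrite ler_pM2l.
  rewrite mulrCA mulNr lerN2 ler_wpM2l //.
  by apply: le_trans (sq_e2_le t) (W_bound tt0).
have q1 := dot_ge (a2 (t - T21)) (a1 t).
have q2 := dot_ge (a1 (t - T12)) (a2 t).
have := hg1 t tt0; have := hg2 t tt0; have := hg1 _ d12; have := hg2 _ d21.
rewrite W'E /g1 /g2; lra.
Qed.


Lemma t0_pos (t : R) : t0 <= t -> 0 < t.
Proof. by move=> h; apply: lt_le_trans h; rewrite /t0 ltr_pwDr // T_ge0. Qed.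

Lemma Wlow (D t d : R) : (forall s, t1 <= s -> - D <= W' s) -> t1 <= t -> 0 <= d ->
  W t - D * d <= W (t + d).
Proof.
move=> hD tt1 d0.
have tt0 : t0 <= t by apply: le_trans tt1; rewrite /t1 lerDl T_ge0.
have hd s : t <= s <= t + d ->
    is_derive s 1 (fun r => - W r - D * r) (- W' s - D).
  move=> /andP[ts _].
  have s0 : 0 < s by apply: t0_pos; exact: le_trans ts.
  apply: (is_derive_congr (is_deriveB (is_deriveN (dW s0))
     (is_derive_scal D (is_derive_id s 1)))) => //.
  by rewrite mulr1.
have hle : t <= t + d by rewrite lerDl.
have := @nonincr_of R (fun r => - W r - D * r) (fun s => - W' s - D) t (t + d) hle hd.
have hn : forall s, t < s < t + d -> - W' s - D <= 0.
  move=> s /andP[ts _]; have := hD s (le_trans tt1 (ltW ts)); lra.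
move=> /(_ hn); rewrite mulrDr; lra.
Qed.

Lemma Hdec (t d eps : R) : t0 <= t -> 0 <= d ->
  (forall r, t <= r <= t + d -> eps <= W r) ->
  H (t + d) <= H t - 2 * beta * eps * d.
Proof.
move=> tt0 d0 hW.
have hd s : t <= s <= t + d ->
    is_derive s 1 (fun r => H r + 2 * beta * eps * r) (H' s + 2 * beta * eps).
  move=> /andP[ts _].
  apply: (is_derive_congr (is_deriveD (dH _)
     (is_derive_scal (2 * beta * eps) (is_derive_id s 1)))) => //.
    apply: lt_le_trans ts; apply: lt_le_trans tt0.
    by rewrite ltrD2l /a0 invf_lt1 // ltr1n.
  by rewrite mulr1.
have hn : forall s, t < s < t + d -> H' s + 2 * beta * eps <= 0.
  move=> s /andP[ts sd].
  have s0 : 0 <= s by apply: ltW; apply: t0_pos; apply: le_trans (ltW ts).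
  have hr : t <= s <= t + d by rewrite !ltW.
  have h2 : 2 * beta * eps <= 2 * beta * W s by rewrite ler_pM2l ?hW // mulr_gt0.
  have := dH_le s0; lra.
have hle : t <= t + d by rewrite lerDl.
have := @nonincr_of R _ _ t (t + d) hle hd hn.
rewrite mulrDr; lra.
Qed.


Lemma W_small (eps : R) : 0 < eps -> exists N, forall t, N <= t -> W t < eps.
Proof.
move=> e0.
have [D [D0 hD]] := W'_ge.
set E := [set y | exists2 s, t0 <= s & y = H s].
have hlb : lbound E 0.
  move=> y [s hs ->]; apply: le_trans (W_ge0 s) (H_ge_W hs).
have hinf : has_inf E.
  split; first by exists (H t0); exists t0.
  by exists 0.
set L := inf E.
set d := eps / (2 * D).
have d0 : 0 < d by rewrite divr_gt0 // mulr_gt0.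
have Dd : D * d = eps / 2.
  by rewrite /d; field; rewrite gt_eqF.
set g := beta * eps * d.
have g0 : 0 < g by apply: mulr_gt0 => //; apply: mulr_gt0.
have [y [N0 hN0 ->] hy] := inf_adherent g0 hinf.
exists (Num.max N0 t1) => t.
rewrite ge_max => /andP[tN0 tt1].
rewrite ltNge; apply/negP => hW.
have tt0 : t0 <= t by apply: le_trans tt1; rewrite /t1 lerDl T_ge0.
have hr : forall r, t <= r <= t + d -> eps / 2 <= W r.
  move=> r /andP[tr rd].
  have rt : 0 <= r - t by rewrite subr_ge0.
  have := Wlow hD tt1 rt; rewrite addrCA subrr addr0.
  have : D * (r - t) <= D * d by apply: ler_wpM2l; [exact: ltW|lra].
  lra.
have := Hdec tt0 (ltW d0) hr.
have hmt : H t <= H N0 by apply: Hmono.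
have hL : L <= H (t + d).
  apply: ge_inf; first by exists 0.
  exists (t + d) => //; apply: le_trans tt0 _; rewrite lerDl; exact: ltW.
rewrite /g in hy.
have : 2 * beta * (eps / 2) * d = beta * eps * d by field.
lra.
Qed.

End Main.
Unset Implicit Arguments.

Lemma norm_lt_of_sq (R : realType) m (u : 'rV[R]_m) (eps : R) : 0 < eps ->
  sq u < eps ^+ 2 -> `|u| < eps.
Proof.
move=> e0 hu.
rewrite /Num.Def.normr /= mx_normrE; apply: bigmax_lt => // -[i j] _ /=.
rewrite (ord1 i).
have h1 := le_lt_trans (sq_coord u j) hu.
have h2 : `|u 0 j| ^+ 2 < eps ^+ 2 by rewrite real_normK ?num_real.
have := normr_ge0 (u 0 j); nra.
Qed.

Lemma eventually_of (R : realType) (P : R -> Prop) (N : R) :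
  (forall t, N <= t -> P t) -> \forall t \near +oo, P t.
Proof.
move=> h; exists N; split; first exact: num_real.
by move=> t /ltW; apply: h.
Qed.

Theorem theorem1 (R : realType) (m p : nat) (f1 f2 : 'rV[R]_m -> R -> 'rV[R]_m)
  (G : 'M[R]_(m, p)) (k12 k21 T12 T21 : R) :
  C1 f1 -> C1 f2 ->
  (exists beta : R, 0 < beta /\ contracting_id f1 beta /\ contracting_id f2 beta) ->
  bounded_jac f1 -> bounded_jac f2 ->
  0 < k12 -> 0 < k21 -> 0 <= T12 -> 0 <= T21 ->
  forall x1 x2 y1 y2 : R -> 'rV[R]_m,
    coupled_solution f1 f2 G k12 k21 T12 T21 x1 x2 ->
    coupled_solution f1 f2 G k12 k21 T12 T21 y1 y2 ->
    (x1 t - y1 t : 'rV[R]_m) @[t --> +oo] --> (0 : 'rV[R]_m) /\ (x2 t - y2 t : 'rV[R]_m) @[t --> +oo] --> (0 : 'rV[R]_m).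
Proof.
move=> hf1 hf2 [beta [hb [hc1 hc2]]] [M1 hM1] [M2 hM2] hk12 hk21 hT12 hT21
  x1 x2 y1 y2 [_ [_ [dx1 dx2]]] [_ [_ [dy1 dy2]]].
have WS := W_small hf1 hf2 hb hc1 hc2 hk12 hk21 hT12 hT21 dx1 dx2 dy1 dy2 hM1 hM2.
split; apply/cvgr0Pnorm_lt => eps e0.
- have [N hN] := WS (k21 * eps ^+ 2) (mulr_gt0 hk21 (exprn_gt0 2 e0)).
  apply: (@eventually_of _ _ N) => t tN.
  apply: norm_lt_of_sq => //.
  have := hN t tN.
  have : 0 <= k12 * sq (x2 t - y2 t) by rewrite mulr_ge0 ?sq_ge0 // ltW.
  move=> h1 h2; rewrite -(ltr_pM2l hk21); lra.
- have [N hN] := WS (k12 * eps ^+ 2) (mulr_gt0 hk12 (exprn_gt0 2 e0)).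
  apply: (@eventually_of _ _ N) => t tN.
  apply: norm_lt_of_sq => //.
  have := hN t tN.
  have : 0 <= k21 * sq (x1 t - y1 t) by rewrite mulr_ge0 ?sq_ge0 // ltW.
  move=> h1 h2; rewrite -(ltr_pM2l hk12); lra.
Qed.
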